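(* Assume the Setup below. For $n\ge1$ let $\Psi(n)=\Psi_{\theta_0}(n)$, $\dot\Psi(n)=\frac{d}{d\theta}\Psi_\theta(n)|_{\theta_0}$ and $$M^{(n)}=|\Psi(n)\rangle\langle\dot\Psi(n)|-|\dot\Psi(n)\rangle\langle\Psi(n)|$$ on $\mathcal H_0\otimes\mathcal H_1\otimes\cdots\otimes\mathcal H_n$. Let $1\le j\le n$ and let $e^{[1]},\dots,e^{[j-1]}\in\mathbb C^k$ be unit vectors with $|\langle e^{[l]}|\chi\rangle|^2=1/k$ for all $l$. Define $$M^{(n)}(\underline{j-1})=\big\langle e^{[1]}\otimes\cdots\otimes e^{[j-1]}\big|M^{(n)}\big|e^{[1]}\otimes\cdots\otimes e^{[j-1]}\big\rangle$$ (partial matrix element over $\mathcal H_1,\dots,\mathcal H_{j-1}$, an operator on $\mathcal H_0\otimes\mathcal H_j\otimes\cdots\otimes\mathcal H_n$) and $M^{(n)}_j(\underline{j-1})=\mathrm{Tr}_{0,j+1,\dots,n}M^{(n)}(\underline{j-1})$, an operator on $\mathcal H_j\cong\mathbb C^k$. Then $$M^{(n)}_j(\underline{j-1})=M^{(j)}_j(\underline{j-1}).$$ Consequently, in the sequential adaptive procedure in which the basis $\{e^{[j]}_i\}_{i=1}^k$ of unit $j$ is chosen (given the previously chosen bases and outcomes $i_1,\dots,i_{j-1}$, with $e^{[l]}=e^{[l]}_{i_l}$) to satisfy $\langle e^{[j]}_i|M^{(n)}_j(\underline{j-1})|e^{[j]}_i\rangle=0$ and $|\langle e^{[j]}_i|\chi\rangle|^2=1/k$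 for all $i$, the constraints determining the bases of units $1,\dots,j$ are the same for every output length $n\ge j$, so these bases can be chosen independently of $n$.
   Context: Setup: Let $D,k\ge2$ be integers, $\mathcal H_0=\mathbb C^D$ (the system, e.g. system plus absorber) and $\mathcal H_1,\dots,\mathcal H_n$ copies of $\mathbb C^k$ (noise units). Let $\chi\in\mathbb C^k$ be a unit vector and $P_\chi=|\chi\rangle\langle\chi|$. Let $\theta\mapsto W_\theta$ be a smooth family of unitaries on $\mathbb C^D\otimes\mathbb C^k$, and let $W^{(j)}_\theta$ denote $W_\theta$ acting on $\mathcal H_0\otimes\mathcal H_j$ (identity on the other factors). Fix $\theta_0$ and write $W=W_{\theta_0}$, $\dot W=\frac{dW_\theta}{d\theta}|_{\theta_0}$. Assume there is a unit vector $\psi\in\mathbb C^D$ with $W(\psi\otimes\chi)=\psi\otimes\chi$ and $\langle\psi\otimes\chi|\dot W|\psi\otimes\chi\rangle=0$. Define $\Psi_\theta(n)=W^{(n)}_\theta\cdots W^{(1)}_\theta(\psi\otimes\chi^{\otimes n})\in\mathcal H_0\otimes\mathcal H_1\otimes\cdots\otimes\mathcal H_n$. $\mathrm{Tr}_{0,j+1,\dots,n}$ denotes partial trace over $\mathcal H_0,\mathcal H_{j+1},\dots,\mathcal H_n$. *)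

(* Defs.v *)
From mathcomp Require Import all_boot all_order all_algebra.
From mathcomp Require Import all_classical all_reals all_analysis.
From mathcomp Require Import complex.

Set Implicit Arguments.
Unset Strict Implicit.
Unset Printing Implicit Defensive.
Import Order.TTheory GRing.Theory Num.Theory.
Local Open Scope ring_scope.

Section QDefs.
Variable R : realType.
Local Notation C := R[i].

Definition smooth (f : R -> R) : Prop :=
  forall (m : nat) (t : R), derivable (derive1n m f) t 1.

Definition csmooth (g : R -> C) : Prop :=
  smooth (fun t => complex.Re (g t)) /\ smooth (fun t => complex.Im (g t)).

Definition cderiv (g : R -> C) (t : R) : C :=
  Complex (derive1 (fun s => complex.Re (g s)) t)
          (derive1 (fun s => complex.Im (g s)) t).

(* vectors in C^T are functions T -> C, operators are kernels T -> T -> C *)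
Definition inner (T : finType) (u v : T -> C) : C := \sum_(x : T) (u x)^* * v x.

Definition unit_vec (T : finType) (u : T -> C) : Prop := inner u u = 1.

Definition unitary (T : finType) (U : T -> T -> C) : Prop :=
  (forall y z : T, \sum_(x : T) (U x y)^* * U x z = (y == z)%:R) /\
  (forall y z : T, \sum_(x : T) U y x * (U z x)^* = (y == z)%:R).

Variables (D k : nat).

(* basis labels of H_0 (x) C^D and of C^D (x) C^k *)
Definition Idx1 := ('I_D * 'I_k)%type.
(* basis labels of H_0 (x) H_1 (x) ... (x) H_n : unit number l+1 is the
   ordinal l : 'I_n *)
Definition Idx (n : nat) := ('I_D * {ffun 'I_n -> 'I_k})%type.

(* W^{(j)} : the operator U on H_0 (x) C^k acting on H_0 (x) H_{j+1}
   (ordinal j), identity elsewhere *)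
Definition actU (n : nat) (U : Idx1 -> Idx1 -> C) (j : 'I_n)
    (v : Idx n -> C) : Idx n -> C :=
  fun x => \sum_(b : 'I_D) \sum_(c : 'I_k)
     U (x.1, x.2 j) (b, c) * v (b, [ffun l => if l == j then c else x.2 l]).

Definition init_state (psi : 'I_D -> C) (chi : 'I_k -> C) (n : nat)
    : Idx n -> C :=
  fun x => psi x.1 * \prod_(l : 'I_n) chi (x.2 l).

Definition PsiTh (Wt : R -> Idx1 -> Idx1 -> C) (psi : 'I_D -> C)
    (chi : 'I_k -> C) (n : nat) (th : R) : Idx n -> C :=
  foldl (fun v j => actU (Wt th) j v) (@init_state psi chi n) (enum 'I_n).

Definition PsiDot (Wt : R -> Idx1 -> Idx1 -> C) (psi : 'I_D -> C)
    (chi : 'I_k -> C) (n : nat) (th0 : R) : Idx n -> C :=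
  fun x => cderiv (fun th => PsiTh Wt psi chi (n:=n) th x) th0.

Definition Mop (Wt : R -> Idx1 -> Idx1 -> C) (psi : 'I_D -> C)
    (chi : 'I_k -> C) (n : nat) (th0 : R) : Idx n -> Idx n -> C :=
  fun x y =>
    PsiTh Wt psi chi (n:=n) th0 x * (PsiDot Wt psi chi (n:=n) th0 y)^*
    - PsiDot Wt psi chi (n:=n) th0 x * (PsiTh Wt psi chi (n:=n) th0 y)^*.

(* M^{(n)}_j(j-1) = Tr_{0,j+1,...,n} <e^[1] (x)...(x) e^[j-1]| M^{(n)}
   |e^[1] (x)...(x) e^[j-1]>, written out entrywise as an operator on
   H_j = C^k.  Unit l+1 corresponds to ordinal l, and e l is the vector
   e^{[l+1]}; unit j is the ordinal with value j.-1. *)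
Definition Mj (Wt : R -> Idx1 -> Idx1 -> C) (psi : 'I_D -> C)
    (chi : 'I_k -> C) (th0 : R) (n j : nat) (e : nat -> 'I_k -> C)
    : 'M[C]_k :=
  \matrix_(c < k, d < k)
    \sum_(a : 'I_D) \sum_(f : {ffun 'I_n -> 'I_k})
      \sum_(g : {ffun 'I_n -> 'I_k} |
             [forall l : 'I_n,
                ((val l == j.-1)%N ==> (f l == c) && (g l == d)) &&
                ((j.-1 < val l)%N ==> (f l == g l))])
        (\prod_(l : 'I_n | (val l < j.-1)%N) ((e (val l) (f l))^* * e (val l) (g l)))
        * Mop Wt psi chi (n:=n) th0 (a, f) (a, g).

End QDefs.

(* Main.v *)
Require Import Defs.
From mathcomp Require Import all_boot all_order all_algebra.
From mathcomp Require Import all_classical all_reals all_analysis.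
From mathcomp Require Import complex.
From mathcomp Require Import ring.
Import Order.TTheory GRing.Theory Num.Theory.
Local Open Scope ring_scope.
Set Implicit Arguments.
Unset Strict Implicit.

Section CDer.
Variable R : realType.
Local Notation C := R[i].

Definition cder (g : R -> C) (t : R) (dg : C) : Prop :=
  is_derive t (1:R) (fun s => complex.Re (g s)) (complex.Re dg) /\
  is_derive t (1:R) (fun s => complex.Im (g s)) (complex.Im dg).

Lemma cder_cderiv g t dg : cder g t dg -> cderiv g t = dg.
Proof.
case=> h1 h2; rewrite /cderiv !derive1E (@derive.derive_val _ _ _ _ _ _ _ h1) (@derive.derive_val _ _ _ _ _ _ _ h2).
by clear h1 h2; case: dg.
Qed.

Lemma is_derive_eqR (f g : R -> R) t df dg :
  is_derive t (1:R) f df -> f = g -> df = dg -> is_derive t (1:R) g dg.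
Proof. by move=> h <- <-. Qed.

Lemma cder_const (a : C) t : cder (fun _ => a) t 0.
Proof.
split.
- apply: (@is_derive_eqR (cst (complex.Re a)) _ _ 0) => //; exact: is_derive_cst.
- apply: (@is_derive_eqR (cst (complex.Im a)) _ _ 0) => //; exact: is_derive_cst.
Qed.

Lemma ReD (a b : C) : complex.Re (a + b) = complex.Re a + complex.Re b.
Proof. by case: a; case: b. Qed.
Lemma ImD (a b : C) : complex.Im (a + b) = complex.Im a + complex.Im b.
Proof. by case: a; case: b. Qed.
Lemma ReM (a b : C) : complex.Re (a * b) = complex.Re a * complex.Re b - complex.Im a * complex.Im b.
Proof. by case: a; case: b. Qed.
Lemma ImM (a b : C) : complex.Im (a * b) = complex.Re a * complex.Im b + complex.Im a * complex.Re b.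
Proof. by case: a; case: b => * /=; ring. Qed.

Lemma cder_add g h t dg dh : cder g t dg -> cder h t dh ->
  cder (fun s => g s + h s) t (dg + dh).
Proof.
case=> g1 g2 [h1 h2]; split.
- move/is_derive_eqR: (is_deriveD g1 h1); apply.
    by apply: boolp.funext => s /=; rewrite ReD.
  by rewrite ReD.
- move/is_derive_eqR: (is_deriveD g2 h2); apply.
    by apply: boolp.funext => s /=; rewrite ImD.
  by rewrite ImD.
Qed.

Lemma cder_mul g h t dg dh : cder g t dg -> cder h t dh ->
  cder (fun s => g s * h s) t (dg * h t + g t * dh).
Proof.
case=> g1 g2 [h1 h2]; split.
- move/is_derive_eqR: (is_deriveB (is_deriveM g1 h1) (is_deriveM g2 h2)); apply.
    by apply: boolp.funext => s /=; rewrite ReM.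
  rewrite ReD !ReM /GRing.scale /=.
  ring.
- move/is_derive_eqR: (is_deriveD (is_deriveM g1 h2) (is_deriveM g2 h1)); apply.
    by apply: boolp.funext => s /=; rewrite ImM.
  rewrite ImD !ImM /GRing.scale /=.
  ring.
Qed.

Lemma cder_sum (I : finType) (F : I -> R -> C) (dF : I -> C) t :
  (forall i, cder (F i) t (dF i)) ->
  cder (fun s => \sum_i F i s) t (\sum_i dF i).
Proof.
move=> H; rewrite unlock /reducebig.
elim: (index_enum I) => [|i r IH] /=.
  exact: cder_const.
exact: cder_add.
Qed.

End CDer.

Section Ffun.
Variable k : nat.
Variable n : nat.

Definition restr (f : {ffun 'I_n.+1 -> 'I_k}) : {ffun 'I_n -> 'I_k} :=
  [ffun l => f (widen_ord (leqnSn n) l)].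
Definition ext (f : {ffun 'I_n -> 'I_k}) (z : 'I_k) : {ffun 'I_n.+1 -> 'I_k} :=
  [ffun l : 'I_n.+1 => if unlift ord_max l is Some l' then f l' else z].

Lemma widen_lift (l : 'I_n) : widen_ord (leqnSn n) l = lift ord_max l.
Proof. by apply: ord_inj; rewrite lift_max. Qed.

Lemma ext_lift f z l : ext f z (lift ord_max l) = f l.
Proof. by rewrite ffunE liftK. Qed.
Lemma ext_widen f z l : ext f z (widen_ord (leqnSn n) l) = f l.
Proof. by rewrite widen_lift ext_lift. Qed.
Lemma ext_max f z : ext f z ord_max = z.
Proof. by rewrite ffunE unlift_none. Qed.
Lemma restr_ext f z : restr (ext f z) = f.
Proof. by apply/ffunP => l; rewrite ffunE ext_widen. Qed.
Lemma ext_restr f : ext (restr f) (f ord_max) = f.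
Proof.
apply/ffunP => l; case: (unliftP ord_max l) => [l'|] ->.
  by rewrite ext_lift ffunE widen_lift.
by rewrite ext_max.
Qed.

Lemma sum_ext (V : nmodType) (F : {ffun 'I_n.+1 -> 'I_k} -> V) :
  \sum_f F f = \sum_(f : {ffun 'I_n -> 'I_k}) \sum_(z : 'I_k) F (ext f z).
Proof.
rewrite pair_bigA /=.
rewrite (reindex (fun p : {ffun 'I_n -> 'I_k} * 'I_k => ext p.1 p.2)) //=.
exists (fun f => (restr f, f ord_max)) => [[f z] _ | f _] /=.
  by rewrite restr_ext ext_max.
by rewrite ext_restr.
Qed.

End Ffun.

Section Psi.
Variable R : realType.
Local Notation C := R[i].
Variables (D k : nat) (chi : 'I_k -> C) (psi : 'I_D -> C).

Definition Lft n (u : Idx D k n -> C) : Idx D k n.+1 -> C :=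
  fun x => u (x.1, restr x.2) * chi (x.2 ord_max).

Lemma actU_Lft (U : Idx1 D k -> Idx1 D k -> C) n (j : 'I_n) u :
  actU U (widen_ord (leqnSn n) j) (Lft u) = Lft (actU U j u).
Proof.
apply: boolp.funext => x; rewrite /actU /Lft mulr_suml; apply: eq_bigr => b _.
rewrite mulr_suml; apply: eq_bigr => c _.
have hm : (ord_max == widen_ord (leqnSn n) j) = false.
  by apply/negbTE; rewrite -val_eqE /= gtn_eqF.
rewrite ffunE hm mulrA; congr (_ * _ * _).
  by rewrite ffunE.
congr (u (b, _)); apply/ffunP => l; rewrite !ffunE.
have -> : (widen_ord (leqnSn n) l == widen_ord (leqnSn n) j) = (l == j).
  by rewrite -val_eqE /= val_eqE.
by [].
Qed.

Lemma foldl_Lft U n (s : seq 'I_n) u :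
  foldl (fun v j => actU U j v) (Lft u) (map (widen_ord (leqnSn n)) s) =
  Lft (foldl (fun v j => actU U j v) u s).
Proof.
by elim: s u => [|j s IH] u //=; rewrite actU_Lft IH.
Qed.

Lemma init_Lft n : init_state psi chi (n:=n.+1) = Lft (init_state psi chi (n:=n)).
Proof.
apply: boolp.funext => x; rewrite /init_state /Lft big_ord_recr /= mulrA.
congr (_ * _ * _); apply: eq_bigr => l _; by rewrite ffunE.
Qed.

Variable Wt : R -> Idx1 D k -> Idx1 D k -> C.

Lemma PsiTh_rec n th (x : Idx D k n.+1) :
  PsiTh Wt psi chi (n:=n.+1) th x =
  \sum_(b : 'I_D) \sum_(c : 'I_k)
     Wt th (x.1, x.2 ord_max) (b, c) * (PsiTh Wt psi chi (n:=n) th (b, restr x.2) * chi c).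
Proof.
rewrite /PsiTh enum_ordSr foldl_rcons init_Lft foldl_Lft /actU.
apply: eq_bigr => b _; apply: eq_bigr => c _.
rewrite /Lft ffunE eqxx; congr (_ * (PsiTh _ _ _ _ (b, _) * _)).
apply/ffunP => l; rewrite !ffunE.
have -> : (widen_ord (leqnSn n) l == ord_max) = false.
  by apply/negbTE; rewrite -val_eqE /= ltn_eqF.
by [].
Qed.

Variable th0 : R.
Hypothesis hfix : forall x : Idx1 D k,
     \sum_(y : Idx1 D k) Wt th0 x y * (psi y.1 * chi y.2) = psi x.1 * chi x.2.
Hypothesis hWsmooth : forall x y : Idx1 D k, csmooth (fun th => Wt th x y).

Lemma enum_ord0 : enum 'I_0 = [::].
Proof. by apply/size0nil; rewrite size_enum_ord. Qed.

Lemma PsiTh0 th x : PsiTh Wt psi chi (n:=0) th x = init_state psi chi (n:=0) x.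
Proof. by rewrite /PsiTh enum_ord0. Qed.

Lemma PsiFix n x : PsiTh Wt psi chi (n:=n) th0 x = init_state psi chi (n:=n) x.
Proof.
elim: n x => [|n IH] x; first exact: PsiTh0.
rewrite PsiTh_rec init_Lft /Lft.
rewrite /init_state /= mulrAC -(hfix (x.1, x.2 ord_max)) mulr_suml pair_bigA /=.
apply: eq_bigr => -[b c] _ /=; rewrite IH /init_state /=; ring.
Qed.

Lemma cder_W x y : cder (fun th => Wt th x y) th0 (cderiv (fun th => Wt th x y) th0).
Proof.
have [h1 h2] := hWsmooth x y.
split; rewrite /cderiv /= derive1E; apply: derivableP; [exact: (h1 0%N th0)|exact: (h2 0%N th0)].
Qed.

Definition dPsi_rec n (x : Idx D k n.+1) : C :=
  \sum_(b : 'I_D) \sum_(c : 'I_k)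
     (cderiv (fun th => Wt th (x.1, x.2 ord_max) (b, c)) th0 *
        (PsiTh Wt psi chi (n:=n) th0 (b, restr x.2) * chi c) +
      Wt th0 (x.1, x.2 ord_max) (b, c) * (PsiDot Wt psi chi (n:=n) th0 (b, restr x.2) * chi c)).

Lemma cder_step n x :
  (forall y, cder (fun th => PsiTh Wt psi chi (n:=n) th y) th0 (PsiDot Wt psi chi (n:=n) th0 y)) ->
  cder (fun th => PsiTh Wt psi chi (n:=n.+1) th x) th0 (dPsi_rec x).
Proof.
move=> IH.
have -> : (fun th => PsiTh Wt psi chi (n:=n.+1) th x) =
  (fun th => \sum_(b : 'I_D) \sum_(c : 'I_k)
     Wt th (x.1, x.2 ord_max) (b, c) * (PsiTh Wt psi chi (n:=n) th (b, restr x.2) * chi c)).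
  by apply: boolp.funext => th; rewrite PsiTh_rec.
apply: cder_sum => b; apply: cder_sum => c.
have := cder_mul (cder_W (x.1, x.2 ord_max) (b, c))
   (cder_mul (IH (b, restr x.2)) (cder_const (chi c) th0)).
by rewrite mulr0 addr0.
Qed.

Lemma PsiDer n x : cder (fun th => PsiTh Wt psi chi (n:=n) th x) th0 (PsiDot Wt psi chi (n:=n) th0 x).
Proof.
elim: n x => [|n IH] x.
  have -> : (fun th => PsiTh Wt psi chi (n:=0) th x) = (fun _ => init_state psi chi (n:=0) x).
    by apply: boolp.funext => th; rewrite PsiTh0.
  have -> : PsiDot Wt psi chi (n:=0) th0 x = 0.
    rewrite /PsiDot.
    have -> : (fun th => PsiTh Wt psi chi (n:=0) th x) = (fun _ => init_state psi chi (n:=0) x).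
      by apply: boolp.funext => th; rewrite PsiTh0.
    exact: cder_cderiv (cder_const _ _).
  exact: cder_const.
have h := cder_step x IH.
by rewrite /PsiDot (cder_cderiv h).
Qed.

Lemma PsiDot_rec n x : PsiDot Wt psi chi (n:=n.+1) th0 x = dPsi_rec x.
Proof. by rewrite /PsiDot (cder_cderiv (cder_step x (@PsiDer n))). Qed.

End Psi.

Section Kernel.
Variable R : realType.
Local Notation C := R[i].
Variables (D k : nat) (chi : 'I_k -> C) (psi : 'I_D -> C).
Variable Wt : R -> Idx1 D k -> Idx1 D k -> C.
Variable th0 : R.
Hypothesis hchi : unit_vec chi.
Hypothesis hWunit : forall th : R, unitary (Wt th).
Hypothesis hWsmooth : forall x y : Idx1 D k, csmooth (fun th => Wt th x y).
Hypothesis hfix : forall x : Idx1 D k,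
     \sum_(y : Idx1 D k) Wt th0 x y * (psi y.1 * chi y.2) = psi x.1 * chi x.2.
Hypothesis hdot : \sum_(x : Idx1 D k) \sum_(y : Idx1 D k)
            (psi x.1 * chi x.2)^* * cderiv (fun th => Wt th x y) th0
              * (psi y.1 * chi y.2) = 0.

Definition phi (y : Idx1 D k) : C := psi y.1 * chi y.2.
Definition dWphi (x : Idx1 D k) : C :=
  \sum_y cderiv (fun th => Wt th x y) th0 * phi y.
Definition Wv (v : Idx1 D k -> C) (x : Idx1 D k) : C := \sum_y Wt th0 x y * v y.
Definition Pc n (f : {ffun 'I_n -> 'I_k}) : C := \prod_l chi (f l).

Lemma conjsum (I : finType) (a b : I -> C) :
  (\sum_x a x * (b x)^*)^* = \sum_x b x * (a x)^*.
Proof. rewrite rmorph_sum; apply: eq_bigr => x _; by rewrite rmorphM /= conjCK mulrC. Qed.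

Lemma K1 : \sum_x dWphi x * (phi x)^* = 0.
Proof.
apply: (etrans _ hdot); apply: eq_bigr => x _; rewrite /dWphi mulr_suml; apply: eq_bigr => y _.
rewrite /phi; ring.
Qed.

Lemma K1' : \sum_x phi x * (dWphi x)^* = 0.
Proof. by rewrite -conjsum K1 rmorph0. Qed.

Lemma cphi x : (phi x)^* = \sum_y (Wt th0 x y)^* * (phi y)^*.
Proof. rewrite /phi -(hfix x) rmorph_sum; apply: eq_bigr => y _; by rewrite rmorphM. Qed.

Lemma K2 v : \sum_x Wv v x * (phi x)^* = \sum_y v y * (phi y)^*.
Proof.
transitivity (\sum_x \sum_y \sum_y' (v y * (phi y')^*) * ((Wt th0 x y')^* * Wt th0 x y)).
  apply: eq_bigr => x _; rewrite cphi /Wv mulr_suml; apply: eq_bigr => y _.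
  rewrite mulr_sumr; apply: eq_bigr => y' _; ring.
rewrite exchange_big; apply: eq_bigr => y _; rewrite exchange_big /=.
under eq_bigr => y' _ do rewrite -mulr_sumr ((hWunit th0).1 y' y).
rewrite (bigD1 y) //= eqxx mulr1 big1 ?addr0 // => y' /negbTE ->; by rewrite mulr0.
Qed.

Lemma K2' v : \sum_x phi x * (Wv v x)^* = \sum_y phi y * (v y)^*.
Proof. by rewrite -conjsum K2 conjsum. Qed.

Lemma hc : \sum_c chi c * (chi c)^* = 1.
Proof. rewrite -hchi /inner; apply: eq_bigr => c _; by rewrite mulrC. Qed.

Lemma K3 n g :
  \sum_y phi y * (PsiDot Wt psi chi (n:=n) th0 (y.1, g) * chi y.2)^* =
  \sum_b psi b * (PsiDot Wt psi chi (n:=n) th0 (b, g))^*.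
Proof.
have -> : \sum_b psi b * (PsiDot Wt psi chi (n:=n) th0 (b, g))^* =
  \sum_b \sum_c (psi b * (PsiDot Wt psi chi (n:=n) th0 (b, g))^*) * (chi c * (chi c)^*).
  by apply: eq_bigr => b _; rewrite -mulr_sumr hc mulr1.
rewrite pair_bigA; apply: eq_bigr => -[b c] _ /=; rewrite /phi rmorphM /=; ring.
Qed.

Lemma Psi_ext n f z a :
  PsiTh Wt psi chi (n:=n.+1) th0 (a, ext f z) = Pc f * phi (a, z).
Proof.
rewrite PsiFix // init_Lft /Lft /= restr_ext ext_max /init_state /Pc /phi /=; ring.
Qed.

Lemma PsiDot_ext n g a z :
  PsiDot Wt psi chi (n:=n.+1) th0 (a, ext g z) =
  Pc g * dWphi (a, z) + Wv (fun y => PsiDot Wt psi chi (n:=n) th0 (y.1, g) * chi y.2) (a, z).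
Proof.
rewrite PsiDot_rec // /dPsi_rec /= restr_ext ext_max [LHS]pair_bigA.
rewrite /dWphi /Wv mulr_sumr -big_split /=; apply: eq_bigr => -[b c] _ /=.
rewrite PsiFix // /init_state /Pc /phi /=; ring.
Qed.

Lemma kernelM n (f g : {ffun 'I_n -> 'I_k}) :
  \sum_(x : Idx1 D k) Mop Wt psi chi (n:=n.+1) th0 (x.1, ext f x.2) (x.1, ext g x.2) =
  \sum_(a : 'I_D) Mop Wt psi chi (n:=n) th0 (a, f) (a, g).
Proof.
set uf := (fun y : Idx1 D k => PsiDot Wt psi chi (n:=n) th0 (y.1, f) * chi y.2).
set ug := (fun y : Idx1 D k => PsiDot Wt psi chi (n:=n) th0 (y.1, g) * chi y.2).
transitivity (\sum_x (Pc f * (Pc g)^* * (phi x * (dWphi x)^*)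
   - Pc f * (Pc g)^* * (dWphi x * (phi x)^*)
   + Pc f * (phi x * (Wv ug x)^*) - (Pc g)^* * (Wv uf x * (phi x)^*))).
  apply: eq_bigr => -[a z] _ /=; rewrite /Mop !Psi_ext !PsiDot_ext.
  rewrite !rmorphD !rmorphM /=; ring.
rewrite !sumrB big_split /= sumrB -!mulr_sumr K1' K1 K2' K2 !mulr0 subrr add0r.
rewrite -(conjsum phi uf) /uf /ug !K3 /Mop.
rewrite conjsum mulr_sumr mulr_sumr -sumrB -sumrB; apply: eq_bigr => a _.
rewrite !PsiFix // /init_state /Pc rmorphM /=; ring.
Qed.

End Kernel.

Section MjSec.
Variable R : realType.
Local Notation C := R[i].
Variables (D k : nat) (chi : 'I_k -> C) (psi : 'I_D -> C).
Variable Wt : R -> Idx1 D k -> Idx1 D k -> C.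
Variable th0 : R.
Hypothesis hchi : unit_vec chi.
Hypothesis hWunit : forall th : R, unitary (Wt th).
Hypothesis hWsmooth : forall x y : Idx1 D k, csmooth (fun th => Wt th x y).
Hypothesis hfix : forall x : Idx1 D k,
     \sum_(y : Idx1 D k) Wt th0 x y * (psi y.1 * chi y.2) = psi x.1 * chi x.2.
Hypothesis hdot : \sum_(x : Idx1 D k) \sum_(y : Idx1 D k)
            (psi x.1 * chi x.2)^* * cderiv (fun th => Wt th x y) th0
              * (psi y.1 * chi y.2) = 0.
Variables (j : nat) (e : nat -> 'I_k -> C).

Definition condb n (c d : 'I_k) (f g : {ffun 'I_n -> 'I_k}) : bool :=
  [forall l : 'I_n,
     ((val l == j.-1)%N ==> (f l == c) && (g l == d)) &&
     ((j.-1 < val l)%N ==> (f l == g l))].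
Definition Pe n (f g : {ffun 'I_n -> 'I_k}) : C :=
  \prod_(l : 'I_n | (val l < j.-1)%N) ((e (val l) (f l))^* * e (val l) (g l)).
Definition Kn n (f g : {ffun 'I_n -> 'I_k}) : C :=
  \sum_(a : 'I_D) Mop Wt psi chi (n:=n) th0 (a, f) (a, g).

Lemma Mj_alt n (c d : 'I_k) : Mj Wt psi chi th0 n j e c d =
  \sum_(f : {ffun 'I_n -> 'I_k}) \sum_(g : {ffun 'I_n -> 'I_k}) (if condb c d f g then Pe f g * Kn f g else 0).
Proof.
rewrite mxE exchange_big; apply: eq_bigr => f _.
rewrite exchange_big /= big_mkcond; apply: eq_bigr => g _.
rewrite /condb /Pe /Kn; case: ifP => _; first by rewrite mulr_sumr.
by [].
Qed.

Variable n : nat.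
Hypothesis hj : (j.-1 < n)%N.

Lemma condb_ext (c d : 'I_k) (f g : {ffun 'I_n -> 'I_k}) z z' :
  condb c d (ext f z) (ext g z') = condb c d f g && (z == z').
Proof.
apply/forallP/andP => [H|[/forallP H hz] l].
  split.
    apply/forallP => l; have := H (widen_ord (leqnSn n) l).
    by rewrite !ext_widen.
  by have := H ord_max; rewrite !ext_max /= (gtn_eqF hj) hj.
case: (unliftP ord_max l) => [l'|] ->.
  by rewrite -widen_lift !ext_widen; exact: H.
by rewrite !ext_max /= (gtn_eqF hj) hj.
Qed.

Lemma Pe_ext (f g : {ffun 'I_n -> 'I_k}) z z' : Pe (ext f z) (ext g z') = Pe f g.
Proof.
rewrite /Pe [LHS]big_mkcond big_ord_recr /= ltnNge (ltnW hj) /= mulr1 [RHS]big_mkcond.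
by apply: eq_bigr => l _ /=; rewrite !ext_widen.
Qed.

Lemma Mj_step : Mj Wt psi chi th0 n.+1 j e = Mj Wt psi chi th0 n j e.
Proof.
apply/matrixP => c d; rewrite !Mj_alt sum_ext; apply: eq_bigr => f _.
under eq_bigr => z _ do rewrite sum_ext.
rewrite exchange_big; apply: eq_bigr => g _.
under eq_bigr => z _ do under eq_bigr => z' _ do rewrite condb_ext Pe_ext.
transitivity (\sum_z (if condb c d f g then Pe f g * Kn (ext f z) (ext g z) else 0)).
  apply: eq_bigr => z _; rewrite (bigD1 z) //= eqxx andbT big1 ?addr0 //.
  by move=> z' hz'; rewrite eq_sym (negbTE hz') andbF.
case: ifP => _; last by rewrite big1.
by rewrite -mulr_sumr /Kn exchange_big pair_bigA /= (kernelM hchi hWunit hWsmooth hfix hdot).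
Qed.

End MjSec.

Unset Implicit Arguments.
Set Strict Implicit.

Theorem mainTheorem2 (R : realType) (D k : nat) (hD : (2 <= D)%N) (hk : (2 <= k)%N)
  (chi : 'I_k -> R[i]) (hchi : unit_vec chi)
  (Wt : R -> Idx1 D k -> Idx1 D k -> R[i])
  (hWunit : forall th : R, unitary (Wt th))
  (hWsmooth : forall x y : Idx1 D k, csmooth (fun th => Wt th x y))
  (th0 : R) (psi : 'I_D -> R[i]) (hpsi : unit_vec psi)
  (hfix : forall x : Idx1 D k,
     \sum_(y : Idx1 D k) Wt th0 x y * (psi y.1 * chi y.2) = psi x.1 * chi x.2)
  (hdot : \sum_(x : Idx1 D k) \sum_(y : Idx1 D k)
            (psi x.1 * chi x.2)^* * cderiv (fun th => Wt th x y) th0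
              * (psi y.1 * chi y.2) = 0)
  (n j : nat) (hn : (1 <= n)%N) (hj1 : (1 <= j)%N) (hjn : (j <= n)%N)
  (e : nat -> 'I_k -> R[i])
  (he : forall l : nat, (l < j.-1)%N ->
          unit_vec (e l) /\ `|inner (e l) chi| ^+ 2 = (k%:R)^-1) :
  Mj Wt psi chi th0 n j e = Mj Wt psi chi th0 j j e.
Proof.
elim: n hn hjn => [//|n IH] _ hjn.
case: (leqP j n) => hjn'.
  have hj' : (j.-1 < n)%N by move: hj1 hjn'; case: (j).

  rewrite (Mj_step hchi hWunit hWsmooth hfix hdot e hj').
  exact: IH (leq_trans hj1 hjn') hjn'.
have -> : j = n.+1 by apply/eqP; rewrite eqn_leq hjn hjn'.
by [].
Qed.
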